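(* Let $p\in(0,1)$, $d\ge2$ an integer, $\alpha>0$, $\beta=(d-1)\big(\frac{p}{d-p}-\alpha\big)$ and $0<s<\beta$. Define for $u\in(-1,0)$ $$f_{\alpha,s}(u)=\ln(1+pu)+\alpha\ln(-u)-(d-1)\Big(\frac{p}{d-p}-\alpha\Big)\ln(1+u)+s\big(\ln(1+u)-\ln(1-1/d)\big).$$ Then $f_{\alpha,s}$ has two stationary points $u_{-,s},u_{+,s}$ with $-1<u_{-,s}<-1/d<u_{+,s}<0$. Moreover, $u_{-,s}$ is strictly decreasing in $s$ and $u_{+,s}$ is strictly increasing in $s$. *)

(* Defs.v *)
From Stdlib Require Import Reals.
Open Scope R_scope.

Definition beta_ (p : R) (d : nat) (alpha : R) : R :=
  (INR d - 1) * (p / (INR d - p) - alpha).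

Definition f_as (p : R) (d : nat) (alpha s : R) (u : R) : R :=
  ln (1 + p * u) + alpha * ln (- u)
  - (INR d - 1) * (p / (INR d - p) - alpha) * ln (1 + u)
  + s * (ln (1 + u) - ln (1 - 1 / INR d)).

Definition stationary (g : R -> R) (u : R) : Prop := derivable_pt_lim g u 0.

(* Main.v *)
Require Import Defs.
From Stdlib Require Import Reals.
From Stdlib Require Import Lra Psatz.
From Coquelicot Require Import Coquelicot.
Open Scope R_scope.

Definition Qf a b c u := a*u*u + b*u + c.
Definition rm a b c := (-b - sqrt (b*b-4*a*c))/(2*a).
Definition rp a b c := (-b + sqrt (b*b-4*a*c))/(2*a).

Lemma quad_facts a b c x0 x1 x2 : x0<x1 -> x1<x2 -> 0<Qf a b c x0 ->
  Qf a b c x1 < 0 -> 0 < Qf a b c x2 ->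
  0<a /\ (forall u, Qf a b c u = a*(u - rm a b c)*(u - rp a b c)) /\
  rm a b c < rp a b c /\ x0 < rm a b c < x1 /\ x1 < rp a b c < x2.
Proof.
  unfold Qf; intros H01 H12 Q0 Q1 Q2.
  assert (ha: 0<a).
  { assert (E: (x2-x1)*(a*x0*x0+b*x0+c) + (x1-x0)*(a*x2*x2+b*x2+c)
       - (x2-x0)*(a*x1*x1+b*x1+c) = a*((x2-x1)*(x1-x0)*(x2-x0))) by ring.
    assert (0 < (x2-x1)*(a*x0*x0+b*x0+c)) by (apply Rmult_lt_0_compat; lra).
    assert (0 < (x1-x0)*(a*x2*x2+b*x2+c)) by (apply Rmult_lt_0_compat; lra).
    assert (0 < (x2-x0)*(-(a*x1*x1+b*x1+c))) by (apply Rmult_lt_0_compat; lra).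
    assert (P:0<(x2-x1)*(x1-x0)*(x2-x0)) by (repeat apply Rmult_lt_0_compat; lra).
    destruct (Rle_or_lt a 0) as [h|h]; [|exact h].
    assert (a*((x2-x1)*(x1-x0)*(x2-x0)) <= 0) by nra. lra. }
  assert (hD: 0 < b*b-4*a*c).
  { assert (4*a*(a*x1*x1+b*x1+c) < 0) by nra.
    assert (E: 4*a*(a*x1*x1+b*x1+c) = (2*a*x1+b)*(2*a*x1+b) - (b*b-4*a*c)) by ring.
    assert (0 <= (2*a*x1+b)*(2*a*x1+b)) by apply Rle_0_sqr. lra. }
  unfold rm, rp.
  assert (hS: 0 < sqrt (b*b-4*a*c)) by (apply sqrt_lt_R0; lra).
  assert (hSS: sqrt (b*b-4*a*c) * sqrt (b*b-4*a*c) = b*b-4*a*c) by (apply sqrt_sqrt; lra).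
  set (SD := sqrt (b*b-4*a*c)) in *.
  assert (hc: c = (b*b - SD*SD)/(4*a)) by (rewrite hSS; field; lra).
  assert (F: forall u, a*u*u+b*u+c = a*(u - (-b-SD)/(2*a))*(u-(-b+SD)/(2*a))).
  { intro u; rewrite hc; field; lra. }
  assert (hmr: (-b-SD)/(2*a) < (-b+SD)/(2*a)).
  { unfold Rdiv; apply Rmult_lt_compat_r; [apply Rinv_0_lt_compat; lra| lra]. }
  split; [exact ha|]. split; [exact F|]. split; [exact hmr|].
  rewrite !F in *.
  set (m := (-b-SD)/(2*a)) in *. set (r := (-b+SD)/(2*a)) in *.
  clearbody m r.
  assert (A1: (x1-m)*(x1-r) < 0).
  { destruct (Rle_or_lt 0 ((x1-m)*(x1-r))) as [h|h]; [|exact h].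
    assert (0 <= a*((x1-m)*(x1-r))) by nra. nra. }
  assert (A0: 0 < (x0-m)*(x0-r)).
  { destruct (Rle_or_lt ((x0-m)*(x0-r)) 0) as [h|h]; [|exact h].
    assert (a*((x0-m)*(x0-r)) <= 0) by nra. nra. }
  assert (A2: 0 < (x2-m)*(x2-r)).
  { destruct (Rle_or_lt ((x2-m)*(x2-r)) 0) as [h|h]; [|exact h].
    assert (a*((x2-m)*(x2-r)) <= 0) by nra. nra. }
  assert (m < x1 < r).
  { destruct (Rle_or_lt x1 m); [nra|]. destruct (Rle_or_lt r x1); [nra|]. lra. }
  assert (x0 < m) by (destruct (Rle_or_lt m x0); [nra|lra]).
  assert (r < x2) by (destruct (Rle_or_lt x2 r); [nra|lra]).
  lra.
Qed.

Lemma deriv_f p d alpha s u : -1<u<0 -> 0<p<1 -> p < INR d ->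
  derivable_pt_lim (f_as p d alpha s) u
   (p/(1+p*u) + alpha/u - (beta_ p d alpha - s)/(1+u)).
Proof.
  intros Hu Hp Hd. unfold f_as, beta_. apply is_derive_Reals. auto_derive.
  - repeat split; nra.
  - field. repeat split; nra.
Qed.

Theorem lemma5p10 (p : R) (d : nat) (alpha : R)
  (hp : 0 < p < 1) (hd : (2 <= d)%nat) (halpha : 0 < alpha) :
  exists um up : R -> R,
    (forall s, 0 < s < beta_ p d alpha ->
       -1 < um s /\ um s < -1 / INR d /\ -1 / INR d < up s /\ up s < 0 /\
       (forall u, -1 < u < 0 ->
          (stationary (f_as p d alpha s) u <-> u = um s \/ u = up s))) /\
    (forall s1 s2, 0 < s1 -> s1 < s2 -> s2 < beta_ p d alpha ->
       um s2 < um s1 /\ up s1 < up s2).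
Proof.
  assert (HD: 2 <= INR d) by (apply le_INR in hd; simpl in hd; lra).
  set (bt := beta_ p d alpha).
  set (A := fun s => p*(1+alpha-bt+s)).
  set (B := fun s => p + alpha*(1+p) - bt + s).
  assert (Qv: forall s u, Qf (A s) (B s) alpha u =
     p*u*(1+u) + alpha*(1+u)*(1+p*u) - (bt - s)*u*(1+p*u)).
  { intros; unfold Qf, A, B; ring. }
  assert (Qd: forall s, Qf (A s) (B s) alpha (-1/INR d) = -(INR d - p)*s/(INR d * INR d)).
  { intros; unfold Qf, A, B, bt, beta_; field; lra. }
  assert (KEY: forall s, 0 < s < bt ->
     0 < A s /\ (forall u, Qf (A s) (B s) alpha u = A s*(u - rm (A s) (B s) alpha)*(u - rp (A s) (B s) alpha)) /\
     rm (A s) (B s) alpha < rp (A s) (B s) alpha /\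
     -1 < rm (A s) (B s) alpha < -1/INR d /\ -1/INR d < rp (A s) (B s) alpha < 0).
  { intros s Hs. apply quad_facts.
    - apply Rmult_lt_reg_r with (INR d); [lra|]. field_simplify; lra.
    - assert (0 < 1/INR d) by (apply Rdiv_lt_0_compat; lra). lra.
    - rewrite Qv. nra.
    - rewrite Qd.
      assert (0 < (INR d - p)*s/(INR d*INR d)) by (apply Rdiv_lt_0_compat; nra).
      replace (- (INR d - p) * s / (INR d * INR d)) with (- ((INR d - p)*s/(INR d*INR d))) by (field; lra).
      lra.
    - rewrite Qv. nra. }
  exists (fun s => rm (A s) (B s) alpha), (fun s => rp (A s) (B s) alpha).
  split.
  - intros s Hs. destruct (KEY s Hs) as (Ha & F & Hmr & H1 & H2).
    split; [lra|]. split; [lra|]. split; [lra|]. split; [lra|].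
    intros u Hu.
    assert (DV := deriv_f p d alpha s u Hu hp ltac:(lra)).
    set (L := p/(1+p*u) + alpha/u - (beta_ p d alpha - s)/(1+u)) in DV.
    assert (LQ: L * (u*(1+u)*(1+p*u)) = Qf (A s) (B s) alpha u).
    { rewrite Qv. unfold L, bt. field. repeat split; nra. }
    assert (NZ: u*(1+u)*(1+p*u) <> 0).
    { assert (0 < (-u)*(1+u)*(1+p*u)) by (repeat apply Rmult_lt_0_compat; nra). nra. }
    unfold stationary. split.
    + intro HS. assert (L = 0) by (exact (uniqueness_limite _ _ _ _ DV HS)).
      assert (E: Qf (A s) (B s) alpha u = 0) by (rewrite <- LQ, H; ring).
      rewrite F in E. apply Rmult_integral in E as [E|E].
      * apply Rmult_integral in E as [E|E]; [lra|left; lra].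
      * right; lra.
    + intro Hor. assert (E: Qf (A s) (B s) alpha u = 0).
      { rewrite F. destruct Hor as [->| ->]; ring. }
      assert (L = 0).
      { rewrite <- LQ in E. apply Rmult_integral in E as [E|E]; [exact E|contradiction]. }
      rewrite <- H. exact DV.
  - intros s1 s2 H1 H12 H2.
    destruct (KEY s1 ltac:(lra)) as (Ha1 & F1 & Hmr1 & I1 & J1).
    destruct (KEY s2 ltac:(lra)) as (Ha2 & F2 & Hmr2 & I2 & J2).
    assert (Dif: forall u, -1 < u < 0 -> Qf (A s2) (B s2) alpha u < Qf (A s1) (B s1) alpha u).
    { intros u Hu. rewrite !Qv.
      assert (0 < (s2-s1)*((-u)*(1+p*u))) by (repeat apply Rmult_lt_0_compat; nra). nra. }
    assert (Neg: forall u, -1 < u < 0 -> Qf (A s1) (B s1) alpha u = 0 ->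
       rm (A s2) (B s2) alpha < u < rp (A s2) (B s2) alpha).
    { intros u Hu Q0. assert (Hn := Dif u Hu). rewrite Q0, F2 in Hn.
      set (m := rm (A s2) (B s2) alpha) in *. set (r := rp (A s2) (B s2) alpha) in *.
      clearbody m r.
      assert (X: (u-m)*(u-r) < 0).
      { destruct (Rle_or_lt 0 ((u-m)*(u-r))) as [h|h]; [|exact h].
        assert (0 <= A s2*((u-m)*(u-r))) by nra. nra. }
      destruct (Rle_or_lt u m); [nra|]. destruct (Rle_or_lt r u); [nra|]. lra. }
    assert (Z1: Qf (A s1) (B s1) alpha (rm (A s1) (B s1) alpha) = 0) by (rewrite F1; ring).
    assert (Z2: Qf (A s1) (B s1) alpha (rp (A s1) (B s1) alpha) = 0) by (rewrite F1; ring).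
    assert (0 < 1/INR d) by (apply Rdiv_lt_0_compat; lra).
    assert (-1/INR d < 0) by (unfold Rdiv in *; lra).
    assert (K1 := Neg (rm (A s1) (B s1) alpha) ltac:(lra) Z1). assert (K2 := Neg (rp (A s1) (B s1) alpha) ltac:(lra) Z2). lra.
Qed.
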